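(* Let $\mathcal S = \mathrm{span}\{g_1,\dots,g_{N-k}\}$, with $0\le k\le N$ and $g_1,\dots,g_{N-k}$ independent, be a toy stabilizer group on $N$ elementary systems. Then the epistemic state of $\mathcal S$ can be written as the mixture of $2^k$ pure states; that is, there exist $2^k$ toy stabilizer groups, each with $N$ independent generators, such that the state of $\mathcal S$ is obtained from them by iterated pairwise mixtures.
   Context: Toy Pauli matrices: $\mathcal{X} = \mathrm{diag}(1,-1,1,-1)$, $\mathcal{Y} = \mathrm{diag}(1,-1,-1,1)$, $\mathcal{Z} = \mathrm{diag}(1,1,-1,-1)$; the toy Pauli group is $G_N = \{\alpha\, p_1\otimes\cdots\otimes p_N : p_i \in \{\mathbb{1}_4,\mathcal X,\mathcal Y,\mathcal Z\}, \alpha\in\{\pm1\}\}$. Let $m: G_N\to P_N$ be the homomorphism into the $N$-qubit Pauli group with $m(\mathcal X_k)=X_k$, $m(\mathcal Z_k)=Z_k$, $m(-\mathbb 1)=-\mathbb 1$; $g,h\in G_N$ ''commute'' if $m(g),m(h)$ commute. A toy stabilizer group is a subgroup of $G_N$ whose elements pairwise ''commute'' and which does not contain $-\mathbb 1$; its epistemic state is the set of ontic states $e_{i_1}\otimes\cdots\otimes e_{i_N}$ ($e_i$ the standard basis of $\mathbb R^4$) fixed by every element of the group. A stabilizer group is pure (maximal information) if it has $N$ independent generators, and mixed otherwise. A stabilizer group $\mathcal S'$ is a rephasing of $\mathcal S$ if for every $g\in\mathcal S$, $g\in\mathcal S'$ or $-g\in \mathcal S'$. For two stabilizer groups $\mathcal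 S,\mathcal S'$ that are rephasings of each other, their mixture is the state with stabilizer group $\mathcal S\cap\mathcal S'$. *)

(* Defs.v *)
From mathcomp Require Import all_boot all_algebra.
Set Implicit Arguments. Unset Strict Implicit. Unset Printing Implicit Defensive.
Import GRing.Theory Num.Theory.
Local Open Scope ring_scope.

(* Letters of the toy Pauli alphabet, encoded in 'I_4:
   0 = identity 1_4, 1 = X, 2 = Y, 3 = Z. *)
Definition letter := 'I_4.

(* Diagonal entry i (i : 'I_4, the index of the ontic basis vector e_i)
   of the toy Pauli matrix p:
     X = diag(1,-1,1,-1), Y = diag(1,-1,-1,1), Z = diag(1,1,-1,-1). *)
Definition toy_diag (p : letter) (i : 'I_4) : int :=
  match nat_of_ord p, nat_of_ord i with
  | 1, 1 | 1, 3 => -1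
  | 2, 1 | 2, 2 => -1
  | 3, 2 | 3, 3 => -1
  | _, _ => 1
  end.

(* Product of two toy Pauli matrices (they are diagonal, the product is again
   a toy Pauli matrix, with no sign): the table is XOR of the codes. *)
Definition lmul (a b : letter) : letter :=
  inord (match nat_of_ord a, nat_of_ord b with
         | 0, n | n, 0 => n
         | 1, 1 | 2, 2 | 3, 3 => 0
         | 1, 2 | 2, 1 => 3
         | 1, 3 | 3, 1 => 2
         | _, _ => 1
         end).

Lemma toy_diag_lmul (a b i : letter) :
  toy_diag (lmul a b) i = toy_diag a i * toy_diag b i.
Proof.
by case: a => [[|[|[|[|?]]]] ?] //; case: b => [[|[|[|[|?]]]] ?] //;
   case: i => [[|[|[|[|?]]]] ?] //; rewrite /toy_diag /lmul /= inordK.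
Qed.

(* Elements of the toy Pauli group G_N: alpha p_1 (x) ... (x) p_N,
   encoded as (sign, letters) with sign = true meaning alpha = -1. *)
Definition tpauli (N : nat) := (bool * {ffun 'I_N -> letter})%type.

Definition tp_one (N : nat) : tpauli N := (false, [ffun => ord0]).
Definition tp_minus_one (N : nat) : tpauli N := (true, [ffun => ord0]).
Definition tp_neg N (g : tpauli N) : tpauli N := (~~ g.1, g.2).
Definition tp_mul N (g h : tpauli N) : tpauli N :=
  (g.1 (+) h.1, [ffun j => lmul (g.2 j) (h.2 j)]).

(* "Commute": m(g), m(h) commute in the N-qubit Pauli group, i.e. the number
   of sites where the (image) single-qubit Paulis anticommute is even. *)
Definition lanticomm (a b : letter) : bool :=
  [&& nat_of_ord a != 0%N, nat_of_ord b != 0%N & a != b].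
Definition tp_commute N (g h : tpauli N) : bool :=
  ~~ odd #|[set j : 'I_N | lanticomm (g.2 j) (h.2 j)]|.

(* Subgroups of G_N: every element of G_N is its own inverse (tp_mul g g = 1),
   so a subset containing 1 and closed under products is a subgroup. *)
Definition is_subgroup N (S : {set tpauli N}) : bool :=
  (tp_one N \in S) && [forall g in S, forall h in S, tp_mul g h \in S].

Definition toy_span N (gs : seq (tpauli N)) : {set tpauli N} :=
  \bigcap_(H : {set tpauli N} | is_subgroup H && all (mem H) gs) H.

Definition toy_independent N (gs : seq (tpauli N)) : Prop :=
  forall i, (i < size gs)%N ->
    nth (tp_one N) gs i \notin
      toy_span [seq nth (tp_one N) gs j | j <- iota 0 (size gs) & j != i].

Definition is_stab_group N (S : {set tpauli N}) : Prop :=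
  [/\ is_subgroup S,
      (forall g h, g \in S -> h \in S -> tp_commute g h) &
      tp_minus_one N \notin S].

Definition pure_stab N (S : {set tpauli N}) : Prop :=
  is_stab_group S /\
  exists gs : seq (tpauli N), [/\ size gs = N, toy_independent gs & S = toy_span gs].

(* Ontic states e_{i_1} (x) ... (x) e_{i_N}. *)
Definition ontic (N : nat) := {ffun 'I_N -> 'I_4}.

(* g e = e for the product basis vector e. *)
Definition fixes N (g : tpauli N) (e : ontic N) : bool :=
  (if g.1 then -1 else 1) * \prod_(j < N) toy_diag (g.2 j) (e j) == 1 :> int.

Definition epistemic N (S : {set tpauli N}) : {set ontic N} :=
  [set e | [forall g in S, fixes g e]].

Definition rephasing N (S S' : {set tpauli N}) : Prop :=
  forall g, g \in S -> g \in S' \/ tp_neg g \in S'.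

(* [mixes l T] : the stabilizer group T is obtained from the list l of
   stabilizer groups (the leaves, in order) by iterated pairwise mixtures:
   the mixture of two stabilizer groups that are rephasings of each other
   is the state with stabilizer group their intersection. *)
Inductive mixes N : seq {set tpauli N} -> {set tpauli N} -> Prop :=
| mixes_leaf S : is_stab_group S -> mixes [:: S] S
| mixes_node l1 l2 S1 S2 :
    mixes l1 S1 -> mixes l2 S2 -> rephasing S1 S2 -> rephasing S2 S1 ->
    mixes (l1 ++ l2) (S1 :&: S2).

(* Main.v *)
Require Import Defs.
From mathcomp Require Import all_boot all_algebra.
From mathcomp Require Import zify.
Set Implicit Arguments. Unset Strict Implicit. Unset Printing Implicit Defensive.


Ltac lcase a := case: a => [[|[|[|[|?]]]] ?] //.
Lemma lmulE (a b : letter) : nat_of_ord (lmul a b) = (match nat_of_ord a, nat_of_ord b with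
         | 0, n | n, 0 => n
         | 1, 1 | 2, 2 | 3, 3 => 0
         | 1, 2 | 2, 1 => 3
         | 1, 3 | 3, 1 => 2
         | _, _ => 1
         end)%N.
Proof. by rewrite /lmul inordK //; lcase a; lcase b. Qed.

Lemma lmulA (a b c : letter) : lmul a (lmul b c) = lmul (lmul a b) c.
Proof. apply: ord_inj; rewrite !lmulE. by lcase a; lcase b; lcase c; rewrite /= !lmulE. Qed.
Lemma lmulC (a b : letter) : lmul a b = lmul b a.
Proof. by apply: ord_inj; rewrite !lmulE; lcase a; lcase b. Qed.
Lemma lmul0 (a : letter) : lmul ord0 a = a.
Proof. by apply: ord_inj; rewrite !lmulE; lcase a. Qed.
Lemma lmulxx (a : letter) : lmul a a = ord0.
Proof. by apply: ord_inj; rewrite !lmulE; lcase a. Qed.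
Lemma lanti_mul (a b c : letter) : lanticomm (lmul a b) c = lanticomm a c (+) lanticomm b c.
Proof. rewrite /lanticomm -!val_eqE /= !lmulE. by lcase a; lcase b; lcase c. Qed.
Lemma lanti_sym (a b : letter) : lanticomm a b = lanticomm b a.
Proof. rewrite /lanticomm -!val_eqE /=. by lcase a; lcase b. Qed.
Lemma lanti_xx (a : letter) : lanticomm a a = false.
Proof. by rewrite /lanticomm eqxx !andbF. Qed.
Lemma lanti0 (a : letter) : lanticomm a ord0 = false.
Proof. by rewrite /lanticomm /= andbF. Qed.


Section G.
Variable N : nat.
Implicit Types g h s t : tpauli N.

Lemma tp_mulA g h s : tp_mul g (tp_mul h s) = tp_mul (tp_mul g h) s.
Proof. rewrite /tp_mul /= addbA; congr pair; apply/ffunP => j; by rewrite !ffunE lmulA. Qed.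
Lemma tp_mulC g h : tp_mul g h = tp_mul h g.
Proof. rewrite /tp_mul /= addbC; congr pair; apply/ffunP => j; by rewrite !ffunE lmulC. Qed.
Lemma tp_mul1 g : tp_mul (tp_one N) g = g.
Proof. case: g => b f; rewrite /tp_mul /=; congr pair; apply/ffunP => j; by rewrite !ffunE lmul0. Qed.
Lemma tp_mulxx g : tp_mul g g = tp_one N.
Proof. rewrite /tp_mul /= addbb; congr pair; apply/ffunP => j; by rewrite !ffunE lmulxx. Qed.
Lemma tp_negE g : tp_neg g = tp_mul (tp_minus_one N) g.
Proof. case: g => b f; rewrite /tp_mul /tp_neg /=; congr pair; apply/ffunP => j; by rewrite !ffunE lmul0. Qed.
Lemma tp_mulK g h : tp_mul g (tp_mul g h) = h.
Proof. by rewrite tp_mulA tp_mulxx tp_mul1. Qed.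
Lemma tp_mul_mm : tp_mul (tp_minus_one N) (tp_minus_one N) = tp_one N.
Proof. exact: tp_mulxx. Qed.

Definition tpc_odd g h := odd #|[set j : 'I_N | lanticomm (g.2 j) (h.2 j)]|.

Lemma card_sum (P : pred 'I_N) : #|[set j | P j]| = \sum_j nat_of_bool (P j).
Proof. rewrite cardsE -sum1_card big_mkcond /=; apply: eq_bigr => i _; by rewrite unfold_in; case: (P i). Qed.
Lemma odd_card_xor (P Q : pred 'I_N) :
  odd #|[set j | P j (+) Q j]| = odd #|[set j | P j]| (+) odd #|[set j | Q j]|.
Proof.
rewrite !card_sum.
apply: (big_rec3 (fun x y z => odd x = odd y (+) odd z)) => //= i x y z _ IH.
rewrite !oddD IH; by case: (P i); case: (Q i); case: (odd y); case: (odd z).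
Qed.

Lemma tpc_mull g h s : tpc_odd (tp_mul g h) s = tpc_odd g s (+) tpc_odd h s.
Proof.
rewrite /tpc_odd -odd_card_xor; congr (odd _); apply: eq_card => j.
by rewrite !inE /= ffunE lanti_mul.
Qed.
Lemma tpc_sym g h : tpc_odd g h = tpc_odd h g.
Proof. by rewrite /tpc_odd; congr (odd _); apply: eq_card => j; rewrite !inE lanti_sym. Qed.
Lemma tpc_mulr g h s : tpc_odd s (tp_mul g h) = tpc_odd s g (+) tpc_odd s h.
Proof. by rewrite tpc_sym tpc_mull !(tpc_sym s). Qed.
Lemma tpc_xx g : tpc_odd g g = false.
Proof. rewrite /tpc_odd; rewrite (eq_card (B := set0)) ?cards0 // => j; by rewrite !inE lanti_xx. Qed.
Lemma tpc_1 g : tpc_odd g (tp_one N) = false.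
Proof. rewrite /tpc_odd; rewrite (eq_card (B := set0)) ?cards0 // => j; by rewrite !inE ffunE lanti0. Qed.
Lemma tp_commuteE g h : tp_commute g h = ~~ tpc_odd g h.
Proof. by []. Qed.

End G.


Section S.
Variable N : nat.
Implicit Types g h s t : tpauli N.
Implicit Types gs : seq (tpauli N).

Lemma subgroupP (H : {set tpauli N}) :
  is_subgroup H <-> tp_one N \in H /\ (forall g h, g \in H -> h \in H -> tp_mul g h \in H).
Proof.
rewrite /is_subgroup; split.
  case/andP=> -> /forallP Hc; split=> // g h gH hH.
  by move: (Hc g); rewrite gH /= => /forallP /(_ h); rewrite hH.
case=> -> Hc; apply/forallP => g; apply/implyP => gH; apply/forallP => h; apply/implyP => hH.
exact: Hc.
Qed.

Lemma span_sub gs : is_subgroup (toy_span gs).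
Proof.
apply/subgroupP; split.
  by apply/bigcapP => H /andP[/subgroupP[]].
move=> g h /bigcapP gH /bigcapP hH; apply/bigcapP => H HP.
move: (HP) => /andP[/subgroupP[_ Hc] _]; apply: Hc; [exact: gH | exact: hH].
Qed.

Lemma span_gen gs g : g \in gs -> g \in toy_span gs.
Proof. by move=> gin; apply/bigcapP => H /andP[_ /allP /(_ g gin)]. Qed.

Lemma span_min gs (H : {set tpauli N}) :
  is_subgroup H -> all (mem H) gs -> toy_span gs \subset H.
Proof. by move=> sH aH; apply: bigcap_inf; rewrite sH aH. Qed.

Lemma span1 gs : tp_one N \in toy_span gs.
Proof. by case/subgroupP: (span_sub gs). Qed.
Lemma spanM gs g h : g \in toy_span gs -> h \in toy_span gs -> tp_mul g h \in toy_span gs.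
Proof. by case/subgroupP: (span_sub gs) => _; apply. Qed.

Lemma span_cons h gs :
  toy_span (h :: gs) = toy_span gs :|: [set tp_mul h s | s in toy_span gs].
Proof.
apply/eqP; rewrite eqEsubset; apply/andP; split.
  apply: span_min.
    apply/subgroupP; split; first by rewrite inE span1.
    move=> g k; rewrite !inE => /orP[gS|/imsetP[s sS ->]] /orP[kS|/imsetP[t tS ->]].
    - by rewrite spanM.
    - apply/orP; right; rewrite tp_mulA (tp_mulC g h) -tp_mulA; apply: imset_f; exact: spanM.
    - apply/orP; right; rewrite -tp_mulA; apply: imset_f; exact: spanM.
    - apply/orP; left; rewrite (tp_mulC h s) -tp_mulA tp_mulK.
      exact: spanM.
  rewrite /= inE; apply/andP; split.
    by apply/orP; right; apply/imsetP; exists (tp_one N); rewrite ?span1 // tp_mulC tp_mul1.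
  by apply/allP => g gin; rewrite /= inE; apply/orP; left; apply: span_gen.
have sub : toy_span gs \subset toy_span (h :: gs).
  apply: span_min; first exact: span_sub.
  by apply/allP => g gin; apply: span_gen; rewrite inE gin orbT.
rewrite subUset sub /=; apply/subsetP => x /imsetP[s sS ->].
apply: spanM; first by apply: span_gen; rewrite inE eqxx.
by apply: (subsetP sub).
Qed.

Lemma span_nil : toy_span [::] \subset [set tp_one N].
Proof.
apply: span_min => //; apply/subgroupP; split; first by rewrite inE.
by move=> g h; rewrite !inE => /eqP-> /eqP->; rewrite tp_mulxx.
Qed.

Lemma card_span gs : #|toy_span gs| <= 2 ^ size gs.
Proof.
elim: gs => [|h gs IH] /=.
  by apply: leq_trans (subset_leq_card (span_nil)) _; rewrite cards1.
rewrite span_cons expnS mul2n -addnn.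
apply: leq_trans (leq_card_setU _ _) _.
apply: leq_add => //; exact: leq_trans (leq_imset_card _ _) IH.
Qed.

Lemma span_subl gs' gs : all (mem (toy_span gs)) gs' -> toy_span gs' \subset toy_span gs.
Proof. by move=> H; apply: span_min => //; exact: span_sub. Qed.

End S.


Lemma drop_list (T : Type) (x0 h : T) (gs : seq T) (i : nat) :
  [seq nth x0 (h :: gs) j | j <- iota 0 (size (h :: gs)) & j != i.+1] =
  h :: [seq nth x0 gs j | j <- iota 0 (size gs) & j != i].
Proof.
by rewrite /= (iotaDl 1 0) filter_map -map_comp.

Qed.

Lemma drop_list0 (T : Type) (x0 h : T) (gs : seq T) :
  [seq nth x0 (h :: gs) j | j <- iota 0 (size (h :: gs)) & j != 0] = gs.
Proof.
rewrite /= (iotaDl 1 0) filter_map -map_comp.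
rewrite (eq_filter (a2 := predT)) // filter_predT.
rewrite -[RHS](mkseq_nth x0); by apply: eq_map => j.
Qed.

Section I.
Variable N : nat.
Implicit Types g h s t : tpauli N.
Implicit Types gs : seq (tpauli N).

Lemma indep_cons h gs : toy_independent gs -> h \notin toy_span gs ->
  toy_independent (h :: gs).
Proof.
move=> Ind hS [|i] ilt; first by rewrite drop_list0.
rewrite drop_list span_cons inE negb_or /=; rewrite /= ltnS in ilt.
have := Ind i ilt; set gs' := [seq _ | _ <- _ & _] => ->; rewrite andTb.
apply/imsetP => -[s sS E]; apply: (negP hS).
have sub : toy_span gs' \subset toy_span gs.
  apply: span_subl; apply/allP => x /mapP[j]; rewrite mem_filter mem_iota /= => /andP[_ jlt] ->.
  by apply: span_gen; apply: mem_nth.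
have -> : h = tp_mul (nth (tp_one N) gs i) s by rewrite E -tp_mulA tp_mulxx tp_mulC tp_mul1.
apply: spanM; first by apply: span_gen; apply: mem_nth.
exact: (subsetP sub).
Qed.
End I.


Section St.
Variable N : nat.
Implicit Types g h s t x : tpauli N.
Implicit Types gs : seq (tpauli N).

Lemma tp_mulKr a b c : tp_mul (tp_mul a b) (tp_mul c b) = tp_mul a c :> tpauli N.
Proof. by rewrite (tp_mulC c b) -tp_mulA tp_mulK. Qed.

Lemma comm_span h gs : (forall g, g \in gs -> tpc_odd h g = false) ->
  forall s, s \in toy_span gs -> tpc_odd h s = false.
Proof.
move=> Hg s sS.
have sub : toy_span gs \subset [set x | ~~ tpc_odd h x].
  apply: span_min.
    apply/subgroupP; split; first by rewrite inE tpc_1.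
    by move=> x y; rewrite !inE tpc_mulr => /negbTE-> /negbTE->.
  by apply/allP => g gin; rewrite /= in_set (Hg g gin).
by move/subsetP: sub => /(_ s sS); rewrite inE => /negbTE.
Qed.

Lemma stab_cons h gs : is_stab_group (toy_span gs) ->
  (forall g, g \in gs -> tpc_odd h g = false) -> tp_neg h \notin toy_span gs ->
  is_stab_group (toy_span (h :: gs)).
Proof.
case=> _ Sc Sm Hg nh.
have Hs := comm_span Hg.
have Sc' : forall s t, s \in toy_span gs -> t \in toy_span gs -> tpc_odd s t = false.
  by move=> s t sS tS; apply/negbTE; exact: Sc.
split; first exact: span_sub.
  move=> x y; rewrite span_cons !inE.
  move=> /orP[xS|/imsetP[s sS ->]] /orP[yS|/imsetP[t tS ->]]; rewrite tp_commuteE.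
  - by rewrite Sc'.
  - by rewrite tpc_mulr tpc_sym Hs // Sc'.
  - by rewrite tpc_mull Hs // Sc'.
  - by rewrite !tpc_mull !tpc_mulr tpc_xx (tpc_sym s h) !Hs // Sc'.
rewrite span_cons inE negb_or Sm /=; apply/imsetP => -[s sS E].
apply: (negP nh).
have -> : tp_neg h = s.
  by rewrite tp_negE tp_mulC -(tp_mulK h s) -E.
exact: sS.
Qed.

Lemma tp_negK h : tp_neg (tp_neg h) = h.
Proof. by rewrite !tp_negE tp_mulK. Qed.

Lemma rephase_cons h gs :
  rephasing (toy_span (h :: gs)) (toy_span (tp_neg h :: gs)).
Proof.
move=> x; rewrite !span_cons !inE => /orP[xS|/imsetP[s sS ->]].
  by left; rewrite xS.
right; apply/orP; right; apply/imsetP; exists s => //.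
by rewrite !tp_negE tp_mulA.
Qed.

Lemma inter_cons h gs : tp_minus_one N \notin toy_span gs ->
  toy_span (h :: gs) :&: toy_span (tp_neg h :: gs) = toy_span gs.
Proof.
move=> nm; apply/setP => x; rewrite inE !span_cons !inE.
case xS: (x \in toy_span gs) => //=.
apply/negP => /andP[/imsetP[s sS Es] /imsetP[t tS Et]].
apply: (negP nm).
have -> : tp_minus_one N = tp_mul s t.
  have -> : s = tp_mul h x by rewrite Es tp_mulK.
  have -> : t = tp_mul (tp_neg h) x by rewrite Et tp_mulK.
  by rewrite tp_mulKr tp_negE tp_mulC -tp_mulA tp_mulxx tp_mulC tp_mul1.
exact: spanM.
Qed.

End St.


Section E.
Variable N : nat.
Implicit Types g h s t x : tpauli N.
Implicit Types gs : seq (tpauli N).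

Definition Cset gs : {set {ffun 'I_N -> letter}} :=
  [set f | all (fun g => ~~ tpc_odd ((false, f) : tpauli N) g) gs].

Definition fm (f0 f : {ffun 'I_N -> letter}) : {ffun 'I_N -> letter} :=
  [ffun j => lmul (f0 j) (f j)].

Lemma fmK f0 : cancel (fm f0) (fm f0).
Proof. by move=> f; apply/ffunP => j; rewrite !ffunE lmulA lmulxx lmul0. Qed.

Lemma Cset_step g gs : #|Cset gs| <= 2 * #|Cset (g :: gs)|.
Proof.
set A := Cset gs; set B := Cset (g :: gs).
have BA : B \subset A by apply/subsetP => f; rewrite !inE /= => /andP[].
rewrite -(cardsID B A) mul2n -addnn; apply: leq_add.
  by apply: subset_leq_card; rewrite subsetIr.
case: (set_0Vmem (A :\: B)) => [->|[f0]]; first by rewrite cards0.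
rewrite !inE /= negb_and => /andP[/orP[]]; last by move/negP.
rewrite negbK => f0g f0A.
rewrite -(card_imset _ (can_inj (fmK f0))); apply: subset_leq_card.
apply/subsetP => _ /imsetP[f /setDP[fA fB] ->].
move: fB; rewrite /B /Cset !inE /= negb_and => /orP[]; last by move: fA; rewrite /A /Cset inE => ->.
rewrite negbK => fg.
have E : forall y, tpc_odd ((false, fm f0 f) : tpauli N) y =
    tpc_odd ((false, f0) : tpauli N) y (+) tpc_odd ((false, f) : tpauli N) y.
  move=> y; rewrite -tpc_mull; by [].
rewrite E f0g fg /=.
apply/allP => y yin; rewrite E.
move: f0A fA; rewrite /A /Cset !inE => /allP /(_ y yin) /negbTE-> /allP /(_ y yin) /negbTE->.
by [].
Qed.

Lemma Cset_card gs : 4 ^ N <= 2 ^ (size gs) * #|Cset gs|.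
Proof.
elim: gs => [|g gs IH].
  rewrite (_ : Cset [::] = setT); last by apply/setP => f; rewrite !inE.
  by rewrite cardsT card_ffun !card_ord mul1n.
apply: leq_trans IH _; rewrite /= expnS -mulnA mulnCA leq_mul2l; apply/orP; right.
exact: Cset_step.
Qed.

Lemma exists_h gs : size gs < N ->
  exists h, [/\ forall g, g \in gs -> tpc_odd h g = false,
     h \notin toy_span gs & tp_neg h \notin toy_span gs].
Proof.
move=> lt.
set I := [set x.2 | x in toy_span gs].
have cI : #|I| <= 2 ^ size gs by exact: leq_trans (leq_imset_card _ _) (card_span gs).
case: (boolP (Cset gs \subset I)) => [sub|].
  have H : 4 ^ N <= 2 ^ (size gs + size gs).
    rewrite expnD; apply: leq_trans (Cset_card gs) _.
    by rewrite leq_mul2l (leq_trans (subset_leq_card sub) cI) orbT.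
  have : 2 ^ (2 * N) <= 2 ^ (size gs + size gs) by rewrite expnM.
  rewrite leq_exp2l // => H2; exfalso; move: H2 lt; lia.
case/subsetPn => f fC fI.
exists (false, f); split.
- move=> g gin; move: fC; rewrite inE => /allP /(_ g gin) /negbTE; by [].
- by apply/negP => hS; apply: (negP fI); apply/imsetP; exists (false, f).
- by apply/negP => hS; apply: (negP fI); apply/imsetP; exists (true, f).
Qed.

End E.


Section M.
Variable N : nat.
Implicit Types g h s t x : tpauli N.
Implicit Types gs : seq (tpauli N).

Lemma mixes_sub l (T : {set tpauli N}) : mixes l T -> forall P, P \in l -> T \subset P.
Proof.
elim=> [S _|l1 l2 S1 S2 _ IH1 _ IH2 _ _] P.
  by rewrite inE => /eqP->.
rewrite mem_cat => /orP[/IH1|/IH2] sub; apply: subset_trans sub.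
  exact: subsetIl.
exact: subsetIr.
Qed.

Lemma mul_neg h : tp_mul h (tp_neg h) = tp_minus_one N.
Proof. by rewrite tp_negE tp_mulC -tp_mulA tp_mulxx tp_mulC tp_mul1. Qed.

Lemma main_ind k : forall gs, k <= N -> size gs = N - k -> toy_independent gs ->
  is_stab_group (toy_span gs) ->
  exists leaves : seq {set tpauli N},
    [/\ size leaves = 2 ^ k, uniq leaves,
        (forall P, P \in leaves -> pure_stab P) & mixes leaves (toy_span gs)].
Proof.
elim: k => [|k IH] gs kN sz Ind St.
  exists [:: toy_span gs]; split => //; last exact: mixes_leaf.
  move=> P; rewrite inE => /eqP->; split=> //; exists gs; split=> //.
  by rewrite sz subn0.
have lt : size gs < N by rewrite sz; lia.
have [h [Hg hS nh]] := exists_h lt.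
have St' := St; case: St' => _ _ Sm.
have kN' : k <= N by lia.
have sz1 : size (h :: gs) = N - k by rewrite /= sz; lia.
have sz2 : size (tp_neg h :: gs) = N - k by rewrite /= sz; lia.
have St1 := stab_cons St Hg nh.
have St2 : is_stab_group (toy_span (tp_neg h :: gs)).
  by apply: stab_cons St _ _; [move=> g gin; exact: Hg | rewrite tp_negK].
have [l1 [s1 u1 p1 m1]] := IH _ kN' sz1 (indep_cons Ind hS) St1.
have [l2 [s2 u2 p2 m2]] := IH _ kN' sz2 (indep_cons Ind nh) St2.
exists (l1 ++ l2); split.
- by rewrite size_cat s1 s2 expnS mul2n addnn.
- rewrite cat_uniq u1 u2 andbT /=; apply/hasPn => P Pl2; apply/negP => Pl1.
  have [[sP _ mP] _] := p1 P Pl1.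
  have h1 : h \in P.
    apply: (subsetP (mixes_sub m1 Pl1)); apply: span_gen; exact: mem_head.
  have h2 : tp_neg h \in P.
    apply: (subsetP (mixes_sub m2 Pl2)); apply: span_gen; exact: mem_head.
  case/subgroupP: sP => _ /(_ _ _ h1 h2); rewrite mul_neg => mP'.
  by rewrite mP' in mP.
- by move=> P; rewrite mem_cat => /orP[/p1|/p2].
have r2 : rephasing (toy_span (tp_neg h :: gs)) (toy_span (h :: gs)).
  by have := @rephase_cons _ (tp_neg h) gs; rewrite tp_negK.
rewrite -(inter_cons h Sm); exact: (mixes_node m1 m2 (@rephase_cons _ h gs) r2).
Qed.
End M.

Unset Implicit Arguments.
Theorem mainTheorem4 (N k : nat) (gs : seq (tpauli N)) :
  (k <= N)%N -> size gs = (N - k)%N -> toy_independent gs ->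
  is_stab_group (toy_span gs) ->
  exists leaves : seq {set tpauli N},
    [/\ size leaves = (2 ^ k)%N, uniq leaves,
        (forall P, P \in leaves -> pure_stab P) &
        exists T, mixes leaves T /\ epistemic T = epistemic (toy_span gs)].
Proof.
move=> kN sz Ind St.
have [l [s u p m]] := main_ind kN sz Ind St.
by exists l; split => //; exists (toy_span gs).
Qed.
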